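(* Let $B$ be a preorder on $\mathcal{SC}$. Then for all $\sigma_1,\sigma_2\in\mathcal{SC}$, $\sigma_1\sqsubseteq_B\sigma_2$ implies $\sigma_1\preceq_B\sigma_2$.
   Context: Fix base types $BT$ with preorder $\leq_{\mathsf b}$ and labels $\mathcal L$. Contract terms: $\sigma::=\mathbf 1\mid ?\mathtt t.\sigma\mid !\mathtt t.\sigma\mid !(\sigma).\sigma\mid ?(\sigma).\sigma\mid \sum_{i\in I}?l_i.\sigma_i\mid \bigoplus_{i\in I}!l_i.\sigma_i\mid \mu x.\sigma\mid x$ ($I$ finite nonempty, labels distinct). $\mathcal{SC}$ = closed guarded terms (guarded: in each $\mu x.\sigma'$, $x$ occurs in $\sigma'$ only under constructors other than $\mu$). $\mathrm{unfold}(\mu x.\sigma')=\mathrm{unfold}(\sigma'[\mu x.\sigma'/x])$, otherwise $\mathrm{unfold}(\sigma)=\sigma$. LTS: $\mathbf 1\xrightarrow\checkmark$; $\lambda.\sigma\xrightarrow\lambda\sigma$ for prefixes (including $!l.\sigma$); $\bigoplus_{i\in I}!l_i.\sigma_i\xrightarrow\tau!l_i.\sigma_i$ for $|I|>1$; $\sum ?l_i.\sigma_i\xrightarrow{?l_i}\sigma_i$; $\mu x.\sigma\xrightarrow\tau\sigma[\mu x.\sigma/x]$. For $B\subseteq\mathcal{SC}^2$: $\lambda_1\bowtie_B\lambda_2$ iff the pair is $(!l,?l)$, $(?l,!l)$, $(!\mathtt t_1,?\mathtt t_2)$ with $\mathtt t_1\leq_{\mathsf b}\mathtt t_2$, $(?\mathtt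 t_1,!\mathtt t_2)$ with $\mathtt t_2\leq_{\mathsf b}\mathtt t_1$, $(!(\sigma_1),?(\sigma_2))$ with $\sigma_1B\sigma_2$, $(?(\sigma_1),!(\sigma_2))$ with $\sigma_2B\sigma_1$. $\rho\|\sigma\xrightarrow\tau_B$ by a $\tau$ of either side, or synchronisation $\rho\xrightarrow{\lambda_1}\rho'$, $\sigma\xrightarrow{\lambda_2}\sigma'$, $\lambda_1\bowtie_B\lambda_2$ giving $\rho'\|\sigma'$. $\dashv_B$: greatest $R$ with $\rho R\sigma$ implying (i) if $\rho\|\sigma$ has no $\xrightarrow\tau_B$ move then $\rho\xrightarrow\checkmark$, $\sigma\xrightarrow\checkmark$; (ii) every $\rho\|\sigma\xrightarrow\tau_B\rho'\|\sigma'$ has $\rho'R\sigma'$. $\sigma_1\sqsubseteq_B\sigma_2$ iff $\forall\rho$, $\rho\dashv_B\sigma_1\Rightarrow\rho\dashv_B\sigma_2$. $\mathcal S(R,B)$ is the set of $(\sigma_1,\sigma_2)$ satisfying all of: if $\mathrm{unfold}(\sigma_1)=\mathbf 1$ then $\mathrm{unfold}(\sigma_2)=\mathbf 1$; if $\mathrm{unfold}(\sigma_1)=?\mathtt t_1.\sigma_1'$ then $\mathrm{unfold}(\sigma_2)=?\mathtt t_2.\sigma_2'$, $\sigma_1'R\sigma_2'$, $\mathtt t_1\leq_{\mathsf b}\mathtt t_2$; if $\mathrm{unfold}(\sigma_1)=!\mathtt t_1.\sigma_1'$ then $\mathrm{unfold}(\sigma_2)=!\mathtt t_2.\sigma_2'$,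 $\sigma_1'R\sigma_2'$, $\mathtt t_2\leq_{\mathsf b}\mathtt t_1$; if $\mathrm{unfold}(\sigma_1)=!(\sigma^m_1).\sigma_1'$ then $\mathrm{unfold}(\sigma_2)=!(\sigma^m_2).\sigma_2'$, $\sigma_1'R\sigma_2'$, $\sigma^m_2B\sigma^m_1$; if $\mathrm{unfold}(\sigma_1)=?(\sigma^m_1).\sigma_1'$ then $\mathrm{unfold}(\sigma_2)=?(\sigma^m_2).\sigma_2'$, $\sigma_1'R\sigma_2'$, $\sigma^m_1B\sigma^m_2$; external sums $\sum_{i\in I}?l_i.\sigma^1_i$ require $\mathrm{unfold}(\sigma_2)=\sum_{j\in J}?l_j.\sigma^2_j$, $I\subseteq J$, $\sigma^1_iR\sigma^2_i$ ($i\in I$); internal sums $\bigoplus_{i\in I}!l_i.\sigma^1_i$ require $\mathrm{unfold}(\sigma_2)=\bigoplus_{j\in J}!l_j.\sigma^2_j$, $J\subseteq I$, $\sigma^1_jR\sigma^2_j$ ($j\in J$). $\preceq_B$ is the greatest $R$ with $R\subseteq\mathcal S(R,B)$. *)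

(* Defs.v *)
From Stdlib Require Import List Arith.
Import ListNotations.
Set Implicit Arguments.

Section Contracts.

Context (BT : Type) (leb : BT -> BT -> Prop) (L : Type).

(* Contract terms; variables are names (nat).
   !l.s is the singleton internal sum Int [(l,s)]; ?l.s the singleton Ext. *)
Inductive contract : Type :=
| One : contract
| InT : BT -> contract -> contract
| OutT : BT -> contract -> contract
| OutS : contract -> contract -> contract
| InS : contract -> contract -> contract
| Ext : list (L * contract) -> contract
| Int : list (L * contract) -> contract
| Mu : nat -> contract -> contract
| Var : nat -> contract.

(* s[t/x] (only used with closed t, so no capture) *)
Fixpoint subst (s : contract) (x : nat) (t : contract) : contract :=
  match s with
  | One => One
  | InT b k => InT b (subst k x t)
  | OutT b k => OutT b (subst k x t)
  | OutS m k => OutS (subst m x t) (subst k x t)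
  | InS m k => InS (subst m x t) (subst k x t)
  | Ext l => Ext (map (fun p => (fst p, subst (snd p) x t)) l)
  | Int l => Int (map (fun p => (fst p, subst (snd p) x t)) l)
  | Mu y k => if Nat.eqb y x then Mu y k else Mu y (subst k x t)
  | Var y => if Nat.eqb y x then t else Var y
  end.

Inductive occurs_free (x : nat) : contract -> Prop :=
| of_var : occurs_free x (Var x)
| of_inT b k : occurs_free x k -> occurs_free x (InT b k)
| of_outT b k : occurs_free x k -> occurs_free x (OutT b k)
| of_outS_m m k : occurs_free x m -> occurs_free x (OutS m k)
| of_outS_k m k : occurs_free x k -> occurs_free x (OutS m k)
| of_inS_m m k : occurs_free x m -> occurs_free x (InS m k)
| of_inS_k m k : occurs_free x k -> occurs_free x (InS m k)
| of_ext ls l c : In (l, c) ls -> occurs_free x c -> occurs_free x (Ext ls)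
| of_int ls l c : In (l, c) ls -> occurs_free x c -> occurs_free x (Int ls)
| of_mu y k : y <> x -> occurs_free x k -> occurs_free x (Mu y k).

Definition closed (s : contract) : Prop := forall x, ~ occurs_free x s.

Inductive unguarded (x : nat) : contract -> Prop :=
| ug_var : unguarded x (Var x)
| ug_mu y k : y <> x -> unguarded x k -> unguarded x (Mu y k).

Inductive wf : contract -> Prop :=
| wf_one : wf One
| wf_var x : wf (Var x)
| wf_inT b k : wf k -> wf (InT b k)
| wf_outT b k : wf k -> wf (OutT b k)
| wf_outS m k : wf m -> wf k -> wf (OutS m k)
| wf_inS m k : wf m -> wf k -> wf (InS m k)
| wf_ext ls : ls <> [] -> NoDup (map fst ls) ->
    (forall p, In p ls -> wf (snd p)) -> wf (Ext ls)
| wf_int ls : ls <> [] -> NoDup (map fst ls) ->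
    (forall p, In p ls -> wf (snd p)) -> wf (Int ls)
| wf_mu x k : ~ unguarded x k -> wf k -> wf (Mu x k).

Definition SC (s : contract) : Prop := wf s /\ closed s.

(* unfold as a relation: unfolds s u  iff  unfold(s) = u *)
Inductive unfolds : contract -> contract -> Prop :=
| unf_mu x k u : unfolds (subst k x (Mu x k)) u -> unfolds (Mu x k) u
| unf_other s : (forall x k, s <> Mu x k) -> unfolds s s.

Inductive action : Type :=
| ACheck : action
| ATau : action
| AInT : BT -> action
| AOutT : BT -> action
| AOutS : contract -> action
| AInS : contract -> action
| AInL : L -> action
| AOutL : L -> action.

(* the LTS; the target of the checkmark transition is irrelevant (One) *)
Inductive lts : contract -> action -> contract -> Prop :=
| lts_one : lts One ACheck One
| lts_inT b k : lts (InT b k) (AInT b) k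
| lts_outT b k : lts (OutT b k) (AOutT b) k
| lts_outS m k : lts (OutS m k) (AOutS m) k
| lts_inS m k : lts (InS m k) (AInS m) k
| lts_outL l k : lts (Int [(l, k)]) (AOutL l) k
| lts_int_tau ls l k : 1 < length ls -> In (l, k) ls ->
    lts (Int ls) ATau (Int [(l, k)])
| lts_ext ls l k : In (l, k) ls -> lts (Ext ls) (AInL l) k
| lts_mu x k : lts (Mu x k) ATau (subst k x (Mu x k)).

Section WithB.
Context (B : contract -> contract -> Prop).

Definition bowtie (a1 a2 : action) : Prop :=
  match a1, a2 with
  | AOutL l1, AInL l2 => l1 = l2
  | AInL l1, AOutL l2 => l1 = l2
  | AOutT t1, AInT t2 => leb t1 t2
  | AInT t1, AOutT t2 => leb t2 t1
  | AOutS s1, AInS s2 => B s1 s2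
  | AInS s1, AOutS s2 => B s2 s1
  | _, _ => False
  end.

Inductive par_tau : contract -> contract -> contract -> contract -> Prop :=
| pt_left r s r' : lts r ATau r' -> par_tau r s r' s
| pt_right r s s' : lts s ATau s' -> par_tau r s r s'
| pt_sync r s r' s' a1 a2 :
    lts r a1 r' -> lts s a2 s' -> bowtie a1 a2 -> par_tau r s r' s'.

Definition compliance_sim (R : contract -> contract -> Prop) : Prop :=
  forall r s, R r s ->
    ((~ exists r' s', par_tau r s r' s') ->
       (exists r', lts r ACheck r') /\ (exists s', lts s ACheck s')) /\
    (forall r' s', par_tau r s r' s' -> R r' s').

Definition complies (r s : contract) : Prop :=
  exists R : contract -> contract -> Prop,
    (forall a b, R a b -> SC a /\ SC b) /\ compliance_sim R /\ R r s.

Definition subcontract (s1 s2 : contract) : Prop :=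
  forall r, SC r -> complies r s1 -> complies r s2.

Definition S_fun (R : contract -> contract -> Prop) (s1 s2 : contract) : Prop :=
  forall u1, unfolds s1 u1 ->
  match u1 with
  | One => unfolds s2 One
  | InT t1 k1 => exists t2 k2, unfolds s2 (InT t2 k2) /\ R k1 k2 /\ leb t1 t2
  | OutT t1 k1 => exists t2 k2, unfolds s2 (OutT t2 k2) /\ R k1 k2 /\ leb t2 t1
  | OutS m1 k1 => exists m2 k2, unfolds s2 (OutS m2 k2) /\ R k1 k2 /\ B m2 m1
  | InS m1 k1 => exists m2 k2, unfolds s2 (InS m2 k2) /\ R k1 k2 /\ B m1 m2
  | Ext ls1 => exists ls2, unfolds s2 (Ext ls2) /\
      forall l c1, In (l, c1) ls1 -> exists c2, In (l, c2) ls2 /\ R c1 c2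
  | Int ls1 => exists ls2, unfolds s2 (Int ls2) /\
      forall l c2, In (l, c2) ls2 -> exists c1, In (l, c1) ls1 /\ R c1 c2
  | _ => True
  end.

Definition subcontract_co (s1 s2 : contract) : Prop :=
  exists R : contract -> contract -> Prop,
    (forall a b, R a b -> SC a /\ SC b) /\
    (forall a b, R a b -> S_fun R a b) /\ R s1 s2.

End WithB.

Definition preorder_on_SC (B : contract -> contract -> Prop) : Prop :=
  (forall a b, B a b -> SC a /\ SC b) /\
  (forall a, SC a -> B a a) /\
  (forall a b c, B a b -> B b c -> B a c).

End Contracts.

Arguments One {BT L}.

(* Main.v *)
Require Import Defs.
From Stdlib Require Import List Arith RelationClasses Lia Classical ClassicalEpsilon.
Import ListNotations.
Set Implicit Arguments.

Arguments Var {BT L}.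
Arguments ACheck {BT L}.
Arguments ATau {BT L}.
Arguments AInL {BT L}.
Arguments AOutL {BT L}.
Arguments AInT {BT L}.
Arguments AOutT {BT L}.

Section S.
Context (BT : Type) (leb : BT -> BT -> Prop) (L : Type).
Notation C := (contract BT L).

Definition contract_ind2 (P : C -> Prop) (H1 : P One)
  (H2 : forall b k, P k -> P (InT b k)) (H3 : forall b k, P k -> P (OutT b k))
  (H4 : forall m k, P m -> P k -> P (OutS m k)) (H5 : forall m k, P m -> P k -> P (InS m k))
  (H6 : forall ls, (forall p, In p ls -> P (snd p)) -> P (Ext ls))
  (H7 : forall ls, (forall p, In p ls -> P (snd p)) -> P (Int ls))
  (H8 : forall x k, P k -> P (Mu x k)) (H9 : forall x, P (Var x)) : forall s, P s :=
  fix F s := match s with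
  | One => H1
  | InT b k => H2 b k (F k)
  | OutT b k => H3 b k (F k)
  | OutS m k => H4 m k (F m) (F k)
  | InS m k => H5 m k (F m) (F k)
  | Ext ls => H6 ls ((fix G (ls : list (L * C)) : forall p, In p ls -> P (snd p) :=
       match ls with
       | [] => fun p H => False_ind _ H
       | q :: ls' => fun p H => match H with
           | or_introl e => eq_ind q (fun p => P (snd p)) (F (snd q)) p e
           | or_intror H' => G ls' p H' end
       end) ls)
  | Int ls => H7 ls ((fix G (ls : list (L * C)) : forall p, In p ls -> P (snd p) :=
       match ls with
       | [] => fun p H => False_ind _ H
       | q :: ls' => fun p H => match H with
           | or_introl e => eq_ind q (fun p => P (snd p)) (F (snd q)) p e
           | or_intror H' => G ls' p H' end
       end) ls)
  | Mu x k => H8 x k (F k)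
  | Var x => H9 x
  end.

Lemma map_id_in (f : L * C -> L * C) ls : (forall p, In p ls -> f p = p) -> map f ls = ls.
Proof. intros H; induction ls; simpl; auto. f_equal; auto with datatypes. Qed.

Lemma subst_notfree : forall (k : C) x t, ~ occurs_free x k -> subst k x t = k.
Proof.
  induction k using contract_ind2; intros x0 t Hn; simpl; auto;
  try (f_equal; [apply IHk1 | apply IHk2]; intro H; apply Hn; constructor; auto; fail);
  try (f_equal; apply IHk; intro H; apply Hn; constructor; auto; fail).
  - f_equal. apply map_id_in. intros [l c] Hp. simpl. f_equal.
    apply (H (l,c) Hp). intro Hc. apply Hn. econstructor; eauto.
  - f_equal. apply map_id_in. intros [l c] Hp. simpl. f_equal.
    apply (H (l,c) Hp). intro Hc. apply Hn. econstructor; eauto.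
  - destruct (Nat.eqb_spec x x0); auto. f_equal. apply IHk. intro H; apply Hn; constructor; auto.
  - destruct (Nat.eqb_spec x x0); auto. subst. exfalso; apply Hn; constructor.
Qed.

Lemma fv_subst : forall (t : C) x y (k : C), closed t ->
  occurs_free y (subst k x t) -> occurs_free y k /\ y <> x.
Proof.
  intros t x y k Ht. induction k using contract_ind2; simpl; intro Hf;
  try (inversion Hf; subst; firstorder (constructor; auto); fail).
  - inversion Hf; subst. apply in_map_iff in H1 as [[l' c'] [E Hin]]. simpl in E. inversion E; subst.
    destruct (H _ Hin H2) as [A Bn]. split; auto. econstructor; eauto.
  - inversion Hf; subst. apply in_map_iff in H1 as [[l' c'] [E Hin]]. simpl in E. inversion E; subst.
    destruct (H _ Hin H2) as [A Bn]. split; auto. econstructor; eauto.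
  - destruct (Nat.eqb_spec x0 x).
    + subst. inversion Hf; subst. split; try constructor; auto.
    + inversion Hf; subst. destruct (IHk H2). split; try constructor; auto.
  - destruct (Nat.eqb_spec x0 x).
    + exfalso. apply (Ht y Hf).
    + inversion Hf; subst. split; try constructor; auto.
Qed.

Lemma unguarded_free : forall x (k : C), unguarded x k -> occurs_free x k.
Proof. intros x k H; induction H; constructor; auto. Qed.

Lemma unguarded_subst : forall (t : C) x y k, closed t -> unguarded y (subst k x t) -> unguarded y k.
Proof.
  intros t x y k Ht. induction k; simpl; intro H; try (inversion H; fail).
  - destruct (Nat.eqb_spec n x); auto. inversion H; subst. constructor; auto.
  - destruct (Nat.eqb_spec n x); auto. exfalso. apply (Ht y). apply unguarded_free; auto.
Qed.

Lemma wf_subst : forall (t : C) x, wf t -> closed t -> forall k, wf k -> wf (subst k x t).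
Proof.
  intros t x Hw Hc k Hk. induction Hk; simpl; try (constructor; auto; fail).
  - destruct (Nat.eqb_spec x0 x); auto. constructor.
  - constructor.
    + destruct ls; simpl; congruence.
    + rewrite map_map. simpl. rewrite map_ext with (g := fst); auto.
    + intros p Hp. apply in_map_iff in Hp as [q [E Hq]]. subst. simpl. auto.
  - constructor.
    + destruct ls; simpl; congruence.
    + rewrite map_map. simpl. rewrite map_ext with (g := fst); auto.
    + intros p Hp. apply in_map_iff in Hp as [q [E Hq]]. subst. simpl. auto.
  - destruct (Nat.eqb_spec x0 x). constructor; auto.
    constructor; auto. intro Hu. apply H. eapply unguarded_subst; eauto.
Qed.

Lemma closed_subst_mu : forall x (k : C), closed (Mu x k) -> closed (subst k x (Mu x k)).
Proof.
  intros x k Hc y Hy. apply fv_subst in Hy as [A Bn]; auto. apply (Hc y). constructor; auto.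
Qed.

Lemma lts_SC : forall (s : C) a s', SC s -> lts s a s' -> SC s'.
Proof.
  intros s a s' [Hw Hc] Hl. destruct Hl.
  - split; auto.
  - inversion Hw; subst. split; auto. intros y Hy; apply (Hc y); constructor; auto.
  - inversion Hw; subst. split; auto. intros y Hy; apply (Hc y); constructor; auto.
  - inversion Hw; subst. split; auto. intros y Hy; apply (Hc y); apply of_outS_k; auto.
  - inversion Hw; subst. split; auto. intros y Hy; apply (Hc y); apply of_inS_k; auto.
  - inversion Hw as [| | | | | | |ls Hne Hnd Hall|]; subst. split.
    + apply (Hall (l,k)). simpl; auto.
    + intros y Hy. apply (Hc y). econstructor; simpl; eauto.
  - inversion Hw as [| | | | | | |ls' Hne Hnd Hall|]; subst. split.
    + constructor. congruence. simpl. constructor; auto. constructor.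
      intros p [<-|[]]. simpl. apply (Hall (l,k)); auto.
    + intros y Hy. inversion Hy; subst. destruct H2 as [E|[]]. inversion E; subst.
      apply (Hc y). econstructor; eauto.
  - inversion Hw as [| | | | | |ls' Hne Hnd Hall| |]; subst. split.
    + apply (Hall (l,k)); auto.
    + intros y Hy. apply (Hc y). econstructor; eauto.
  - inversion Hw; subst. split.
    + apply wf_subst; auto.
    + apply closed_subst_mu; auto.
Qed.


Fixpoint mudepth (s : C) : nat := match s with Mu _ k => S (mudepth k) | _ => 0 end.
Fixpoint mubody (s : C) : C := match s with Mu _ k => mubody k | _ => s end.

Lemma wf_body_var : forall (s : C) z, wf s -> mubody s = Var z -> unguarded z s.
Proof.
  induction s; simpl; intros z Hw E; try discriminate.
  - inversion Hw; subst. assert (unguarded z s) by auto.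
    destruct (Nat.eq_dec n z). subst; contradiction. constructor; auto.
  - inversion E; constructor.
Qed.

Lemma SC_body : forall (s : C), SC s -> forall z, mubody s <> Var z.
Proof.
  intros s [Hw Hc] z E. apply (Hc z). apply unguarded_free. apply wf_body_var; auto.
Qed.

Lemma mudepth_subst : forall (t : C) x k, (forall z, mubody k <> Var z) ->
  mudepth (subst k x t) = mudepth k.
Proof.
  intros t x k. induction k; simpl; intro H; auto.
  - destruct (Nat.eqb_spec n x); simpl; auto.
  - exfalso; apply (H n); auto.
Qed.

Lemma unfolds_total_n : forall n (s : C), mudepth s = n -> SC s -> exists u, unfolds s u.
Proof.
  induction n; intros s E Hs.
  - exists s. constructor. intros x k ->. discriminate.
  - destruct s; try discriminate. simpl in E.
    assert (Hs' : SC (subst s n0 (Mu n0 s))) by (eapply lts_SC; eauto; constructor).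
    destruct (IHn (subst s n0 (Mu n0 s))) as [u Hu]; auto.
    rewrite mudepth_subst; [lia|]. intros z. apply (SC_body Hs).
    exists u. constructor; auto.
Qed.

Lemma unfolds_total : forall (s : C), SC s -> exists u, unfolds s u.
Proof. intros s; apply (unfolds_total_n (n:=mudepth s)); auto. Qed.

Lemma unfolds_nonmu : forall (s u : C), unfolds s u -> forall x k, u <> Mu x k.
Proof. intros s u H; induction H; auto. Qed.

Lemma unfolds_id : forall (s u : C), (forall x k, s <> Mu x k) -> unfolds s u -> u = s.
Proof. intros s u Hs H; destruct H; auto. exfalso; eapply Hs; eauto. Qed.

Lemma unfolds_det : forall (s u1 u2 : C), unfolds s u1 -> unfolds s u2 -> u1 = u2.
Proof.
  intros s u1 u2 H; revert u2; induction H; intros u2 H2.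
  - inversion H2; subst; auto. exfalso; eapply H0; eauto.
  - symmetry. apply unfolds_id; auto.
Qed.

Lemma unfolds_SC : forall (s u : C), unfolds s u -> SC s -> SC u.
Proof.
  intros s u H; induction H; auto. intros Hs. apply IHunfolds. eapply lts_SC; eauto; constructor.
Qed.

Lemma SC_notvar : forall (s : C) z, SC s -> s <> Var z.
Proof. intros s z [_ Hc] ->. apply (Hc z). constructor. Qed.


Section WB.
Context (B : C -> C -> Prop).
Notation comp := (complies leb B).
Notation pt := (par_tau leb B).

Lemma complies_SC : forall r s, comp r s -> SC r /\ SC s.
Proof. intros r s [R [H1 [H2 H3]]]; auto. Qed.

Lemma complies_step : forall r s r' s', comp r s -> pt r s r' s' -> comp r' s'.
Proof.
  intros r s r0 s0 [R [H1 [H2 H3]]] Hp. exists R; split; [|split]; auto.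
  destruct (H2 _ _ H3) as [_ H4]; auto.
Qed.

Lemma complies_stuck : forall r s, comp r s -> ~ (exists r' s', pt r s r' s') ->
  (exists r', lts r ACheck r') /\ (exists s', lts s ACheck s').
Proof. intros r s [R [H1 [H2 H3]]] Hn. destruct (H2 _ _ H3) as [H _]; auto. Qed.

Lemma complies_intro : forall r s, SC r -> SC s ->
  ((~ exists r' s', pt r s r' s') ->
       (exists r', lts r ACheck r') /\ (exists s', lts s ACheck s')) ->
  (forall r' s', pt r s r' s' -> comp r' s') -> comp r s.
Proof.
  intros r s Hr Hs Hst Hmv.
  exists (fun a b => comp a b \/ (a = r /\ b = s)). split; [|split].
  - intros a0 b0 [H|[-> ->]]; auto. apply complies_SC; auto.
  - intros a0 b0 [H|[-> ->]].
    + split. apply complies_stuck; auto. intros a1 b1 Hp. left. eapply complies_step; eauto.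
    + split; auto.
  - right; auto.
Qed.

Lemma back_mu : forall r x k, SC r -> SC (Mu x k) -> comp r (subst k x (Mu x k)) -> comp r (Mu x k).
Proof.
  intros r x k Hr Hs Hc.
  exists (fun a b => comp a b \/ (b = Mu x k /\ SC a /\ comp a (subst k x (Mu x k)))). split; [|split].
  - intros a0 b0 [H|[-> [Ha _]]]; auto. apply complies_SC; auto.
  - intros a0 b0 [H|[-> [Ha Hca]]].
    + split. apply complies_stuck; auto. intros a1 b1 Hp. left. eapply complies_step; eauto.
    + split.
      * intros Hn. exfalso. apply Hn. exists a0, (subst k x (Mu x k)). apply pt_right. constructor.
      * intros a1 b1 Hp. inversion Hp; subst.
        -- right. split; auto. assert (comp a1 (subst k x (Mu x k))) by
             (eapply complies_step; eauto; apply pt_left; auto).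
           split; auto. apply complies_SC in H0; tauto.
        -- left. inversion H; subst. auto.
        -- inversion H0; subst. destruct a2; simpl in H1; contradiction.
  - right; auto.
Qed.

Lemma complies_back : forall r s u, SC r -> SC s -> unfolds s u -> comp r u -> comp r s.
Proof.
  intros r s u Hr Hs Hu; induction Hu; intros Hc; auto.
  apply back_mu; auto. apply IHHu; auto. eapply lts_SC; eauto; constructor.
Qed.

Lemma complies_fwd : forall r s u, comp r s -> unfolds s u -> comp r u.
Proof.
  intros r s u Hc Hu; induction Hu; auto. apply IHHu.
  eapply complies_step; eauto. apply pt_right. constructor.
Qed.

End WB.

Fixpoint msubst (sg : list (nat * C)) (m : C) : C :=
  match sg with [] => m | (x, c) :: sg' => msubst sg' (subst m x c) end.

Fixpoint dualE (sg : list (nat * C)) (s : C) : C :=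
  match s with
  | One => One
  | InT b k => OutT b (dualE sg k)
  | OutT b k => InT b (dualE sg k)
  | OutS m k => InS (msubst sg m) (dualE sg k)
  | InS m k => OutS (msubst sg m) (dualE sg k)
  | Ext ls => Int (map (fun p => (fst p, dualE sg (snd p))) ls)
  | Int ls => Ext (map (fun p => (fst p, dualE sg (snd p))) ls)
  | Mu x k => Mu x (dualE ((x, msubst sg (Mu x k)) :: sg) k)
  | Var x => Var x
  end.

Definition dual (s : C) := dualE [] s.

Definition cvals (sg : list (nat * C)) := forall z c, In (z, c) sg -> closed c.

Lemma msubst_closed_id : forall sg (m : C), closed m -> msubst sg m = m.
Proof.
  induction sg as [|[z c] sg IH]; simpl; intros m Hm; auto.
  rewrite subst_notfree; auto.
Qed.

Lemma fv_msubst : forall sg (m : C) y, cvals sg -> occurs_free y (msubst sg m) ->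
  occurs_free y m /\ ~ In y (map fst sg).
Proof.
  induction sg as [|[z c] sg IH]; simpl; intros m y Hc Hf; auto.
  destruct (IH _ _ (fun z0 c0 H => Hc z0 c0 (or_intror H)) Hf) as [A Bn].
  apply fv_subst in A as [A1 A2]; [|apply (Hc z c); left; reflexivity].
  split; auto. intros [E|E]; auto.
Qed.

Lemma msubst_closed : forall sg (m : C), cvals sg ->
  (forall z, occurs_free z m -> In z (map fst sg)) -> closed (msubst sg m).
Proof.
  intros sg m Hc Hd y Hy. apply fv_msubst in Hy as [A Bn]; auto.
Qed.

Lemma msubst_wf : forall sg (m : C), (forall z c, In (z, c) sg -> closed c /\ wf c) ->
  wf m -> wf (msubst sg m).
Proof.
  induction sg as [|[z c] sg IH]; simpl; intros m Hc Hw; auto.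
  apply IH. intros; eapply Hc; right; eauto.
  destruct (Hc z c); [left; reflexivity|]. apply wf_subst; auto.
Qed.

Lemma subst_comm : forall (c v : C) x y m, closed c -> closed v -> x <> y ->
  subst (subst m x c) y v = subst (subst m y v) x c.
Proof.
  intros c v x y m Hc Hv Hxy. induction m using contract_ind2; simpl; try congruence.
  - f_equal. rewrite !map_map. apply map_ext_in. intros [l k] Hp. simpl. f_equal. apply (H _ Hp).
  - f_equal. rewrite !map_map. apply map_ext_in. intros [l k] Hp. simpl. f_equal. apply (H _ Hp).
  - repeat (match goal with |- context [Nat.eqb ?a ?b] => destruct (Nat.eqb_spec a b) end; simpl);
      subst; try congruence.
  - repeat (match goal with |- context [Nat.eqb ?a ?b] => destruct (Nat.eqb_spec a b) end; simpl);
      subst; try congruence; rewrite subst_notfree; auto.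
Qed.

Lemma subst_subst_same : forall (v c : C) x m, closed v -> subst (subst m x v) x c = subst m x v.
Proof.
  intros v c x m Hv. apply subst_notfree. intro H. apply fv_subst in H as [_ H]; auto.
Qed.

Lemma dualE_ext : forall s sg1 sg2 (V : nat -> Prop),
  (forall z, occurs_free z s -> V z) ->
  (forall m, (forall z, occurs_free z m -> V z) -> msubst sg1 m = msubst sg2 m /\ closed (msubst sg1 m)) ->
  dualE sg1 s = dualE sg2 s.
Proof.
  induction s using contract_ind2; intros sg1 sg2 V HV Hm; simpl; auto;
  try (f_equal; eapply IHs; eauto; intros; apply HV; constructor; auto; fail).
  - f_equal. apply Hm. intros; apply HV; constructor; auto.
    eapply IHs2; eauto. intros; apply HV; apply of_outS_k; auto.
  - f_equal. apply Hm. intros; apply HV; constructor; auto.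
    eapply IHs2; eauto. intros; apply HV; apply of_inS_k; auto.
  - f_equal. apply map_ext_in. intros [l k] Hp. simpl. f_equal. eapply (H _ Hp); eauto.
    intros z Hz; apply HV. econstructor; eauto.
  - f_equal. apply map_ext_in. intros [l k] Hp. simpl. f_equal. eapply (H _ Hp); eauto.
    intros z Hz; apply HV. econstructor; eauto.
  - destruct (Hm (Mu x s)) as [E Hcl]; auto. rewrite E. f_equal.
    apply IHs with (V := fun z => z = x \/ V z).
    + intros z Hz. destruct (Nat.eq_dec x z); auto. right. apply HV; constructor; auto.
    + intros m Hm'. simpl. rewrite <- E. apply Hm. intros z Hz.
      apply fv_subst in Hz as [A Bn]; auto. destruct (Hm' z A); auto. congruence.
Qed.

Lemma dualE_closed_indep : forall sg (c : C), closed c -> dualE sg c = dualE [] c.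
Proof.
  intros sg c Hc. apply dualE_ext with (V := fun _ => False).
  - intros z Hz; apply (Hc z Hz).
  - intros m Hm. assert (closed m) by (intros z Hz; apply (Hm z Hz)).
    rewrite !msubst_closed_id; auto.
Qed.


Ltac eqbd := repeat (match goal with |- context [Nat.eqb ?a ?b] => destruct (Nat.eqb_spec a b) end; simpl).

Lemma dual_subst : forall k sg x (c : C), closed c -> cvals sg ->
  (forall z, occurs_free z k -> z = x \/ In z (map fst sg)) ->
  dualE sg (subst k x c) = subst (dualE ((x, c) :: sg) k) x (dualE sg c).
Proof.
  induction k using contract_ind2; intros sg x0 c Hc Hsg Hfv; simpl; auto;
  try (f_equal; apply IHk; auto; intros z Hz; apply Hfv; constructor; auto; fail).
  - f_equal.
    + symmetry; apply subst_notfree. intro H. apply fv_msubst in H as [H _]; auto.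
      apply fv_subst in H as [_ H]; auto.
    + apply IHk2; auto. intros z Hz; apply Hfv; apply of_outS_k; auto.
  - f_equal.
    + symmetry; apply subst_notfree. intro H. apply fv_msubst in H as [H _]; auto.
      apply fv_subst in H as [_ H]; auto.
    + apply IHk2; auto. intros z Hz; apply Hfv; apply of_inS_k; auto.
  - f_equal. rewrite !map_map. apply map_ext_in. intros [l k] Hp. simpl. f_equal.
    apply (H _ Hp); auto. intros z Hz; apply Hfv; econstructor; eauto.
  - f_equal. rewrite !map_map. apply map_ext_in. intros [l k] Hp. simpl. f_equal.
    apply (H _ Hp); auto. intros z Hz; apply Hfv; econstructor; eauto.
  - destruct (Nat.eqb_spec x x0).
    + subst x0. simpl; eqbd; try congruence.
      assert (Hv : closed (msubst sg (Mu x k))).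
      { apply msubst_closed; auto. intros z Hz. inversion Hz; subst.
        destruct (Hfv z Hz); auto. congruence. }
      f_equal. apply dualE_ext with (V := fun z => z = x \/ In z (map fst sg)).
      * intros z Hz. destruct (Nat.eq_dec z x); auto. apply Hfv. constructor; auto.
      * intros m Hm. simpl. rewrite subst_subst_same; auto. split; auto.
        apply msubst_closed; auto. intros z Hz. apply fv_subst in Hz as [A Bn]; auto.
        destruct (Hm z A); auto. congruence.
    + simpl. eqbd; try congruence.
      set (v1 := msubst sg (Mu x (subst k x0 c))).
      assert (Hv : closed v1).
      { apply msubst_closed; auto. intros z Hz. inversion Hz; subst.
        match goal with H : occurs_free z (subst _ _ _) |- _ => apply fv_subst in H as [A Bn]; auto end.
        destruct (Hfv z); auto. constructor; auto. congruence. }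
      assert (Hsg' : cvals ((x, v1) :: sg)).
      { intros z c' [E|E]; [inversion E; subst; auto | apply (Hsg z c' E)]. }
      f_equal. rewrite IHk; auto.
      * rewrite (dualE_closed_indep ((x,v1)::sg) Hc), (dualE_closed_indep sg Hc). f_equal.
        apply dualE_ext with (V := fun z => z = x0 \/ z = x \/ In z (map fst sg)).
        -- intros z Hz. destruct (Nat.eq_dec z x); auto. destruct (Hfv z); auto. constructor; auto.
        -- intros m Hm. simpl. rewrite subst_comm; auto. split; auto.
           apply msubst_closed; auto. intros z Hz.
           apply fv_subst in Hz as [A Bn]; auto. apply fv_subst in A as [A Bn']; auto.
           destruct (Hm z A) as [|[|]]; auto; congruence.
      * intros z Hz. destruct (Nat.eq_dec z x); subst. right; left; auto.
        destruct (Hfv z); auto. constructor; auto. right; right; auto.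
  - eqbd; auto.
Qed.


Lemma dualE_unguarded : forall k sg y, unguarded y (dualE sg k) -> unguarded y k.
Proof.
  induction k; simpl; intros sg y H; try (inversion H; fail).
  - inversion H; subst. constructor; eauto.
  - auto.
Qed.

Lemma dualE_wf : forall s sg, (forall z c, In (z, c) sg -> closed c /\ wf c) -> wf s ->
  (forall z, occurs_free z s -> In z (map fst sg)) -> wf (dualE sg s).
Proof.
  intros s sg Hsg Hw. revert sg Hsg. induction Hw; intros sg Hsg Hfv; simpl;
  try (constructor; auto; fail).
  - constructor; apply IHHw; auto. intros; apply Hfv; constructor; auto.
  - constructor; apply IHHw; auto. intros; apply Hfv; constructor; auto.
  - constructor. apply msubst_wf; auto. apply IHHw2; auto. intros; apply Hfv; apply of_outS_k; auto.
  - constructor. apply msubst_wf; auto. apply IHHw2; auto. intros; apply Hfv; apply of_inS_k; auto.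
  - constructor.
    + destruct ls; simpl; congruence.
    + rewrite map_map. simpl. rewrite map_ext with (g := fst); auto.
    + intros p Hp. apply in_map_iff in Hp as [[l c] [E Hq]]. subst. simpl. apply (H2 _ Hq); auto.
      intros z Hz; apply Hfv. econstructor; eauto.
  - constructor.
    + destruct ls; simpl; congruence.
    + rewrite map_map. simpl. rewrite map_ext with (g := fst); auto.
    + intros p Hp. apply in_map_iff in Hp as [[l c] [E Hq]]. subst. simpl. apply (H2 _ Hq); auto.
      intros z Hz; apply Hfv. econstructor; eauto.
  - constructor.
    + intro Hu. apply H. eapply dualE_unguarded; eauto.
    + apply IHHw.
      * intros z c [E|E]; [|eapply Hsg; eauto]. inversion E; subst. split.
        -- apply msubst_closed. intros z0 c0 Hi; apply (Hsg z0 c0 Hi). auto.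
        -- apply msubst_wf; auto. constructor; auto.
      * intros z Hz. destruct (Nat.eq_dec x z). left; auto. right. apply Hfv. constructor; auto.
Qed.

Lemma dualE_fv : forall s sg y, cvals sg -> (forall z, occurs_free z s -> In z (map fst sg)) ->
  occurs_free y (dualE sg s) -> occurs_free y s.
Proof.
  induction s using contract_ind2; simpl; intros sg y Hsg Hfv Hy.
  - inversion Hy.
  - inversion Hy; subst. constructor. eapply IHs; eauto. intros; apply Hfv; constructor; auto.
  - inversion Hy; subst. constructor. eapply IHs; eauto. intros; apply Hfv; constructor; auto.
  - inversion Hy; subst.
    + exfalso. refine (@msubst_closed sg s1 Hsg _ y H0). intros; apply Hfv; constructor; auto.
    + apply of_outS_k. eapply IHs2; eauto. intros; apply Hfv; apply of_outS_k; auto.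
  - inversion Hy; subst.
    + exfalso. refine (@msubst_closed sg s1 Hsg _ y H0). intros; apply Hfv; constructor; auto.
    + apply of_inS_k. eapply IHs2; eauto. intros; apply Hfv; apply of_inS_k; auto.
  - inversion Hy; subst. apply in_map_iff in H1 as [[l' c'] [E Hq]]. simpl in E. inversion E; subst.
    econstructor; eauto. eapply (H _ Hq); eauto. intros; apply Hfv; econstructor; eauto.
  - inversion Hy; subst. apply in_map_iff in H1 as [[l' c'] [E Hq]]. simpl in E. inversion E; subst.
    econstructor; eauto. eapply (H _ Hq); eauto. intros; apply Hfv; econstructor; eauto.
  - inversion Hy; subst. constructor; auto. apply IHs with (sg := (x, msubst sg (Mu x s)) :: sg); auto.
    + intros z c [E|E]; [|apply (Hsg z c E)]. inversion E; subst.
      apply msubst_closed; auto.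
    + intros z Hz. destruct (Nat.eq_dec x z). left; auto. right. apply Hfv. constructor; auto.
  - auto.
Qed.

Lemma SC_dual : forall s, SC s -> SC (dual s).
Proof.
  intros s [Hw Hc]. split.
  - apply dualE_wf; auto; try (intros z c []; fail); try (intros z Hz; exfalso; apply (Hc z Hz)).
  - intros y Hy. apply (Hc y). eapply dualE_fv; eauto; try (intros z c []; fail); try (intros z Hz; exfalso; apply (Hc z Hz)).
Qed.

Lemma dual_mu : forall x k, closed (Mu x k) ->
  subst (dualE [(x, Mu x k)] k) x (Mu x (dualE [(x, Mu x k)] k)) = dual (subst k x (Mu x k)).
Proof.
  intros x k Hc. unfold dual. rewrite dual_subst; auto.
  - intros z c [].
  - intros z Hz. destruct (Nat.eq_dec z x); auto. exfalso. apply (Hc z). constructor; auto.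
Qed.

Lemma dual_nonmu : forall s, (forall x k, s <> Mu x k) -> forall x k, dual s <> Mu x k.
Proof. intros s H x k. destruct s; simpl; try discriminate. exfalso; eapply H; eauto. Qed.

Lemma unfolds_dual : forall s u, unfolds s u -> SC s -> unfolds (dual s) (dual u).
Proof.
  intros s u H; induction H; intros Hs.
  - unfold dual at 1. simpl. constructor. rewrite dual_mu by (apply Hs).
    apply IHunfolds. eapply lts_SC; eauto; constructor.
  - constructor. apply dual_nonmu; auto.
Qed.

Lemma lts_Mu_inv : forall x k a (r' : C), lts (Mu x k) a r' -> a = ATau /\ r' = subst k x (Mu x k).
Proof. intros. inversion H; subst; auto. Qed.

Lemma lts_Int1_inv : forall l k a (r' : C), lts (Int [(l, k)]) a r' -> a = AOutL l /\ r' = k.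
Proof. intros. inversion H; subst; auto. match goal with Hl : 1 < length _ |- _ => simpl in Hl; lia end. Qed.

Lemma lts_Ext_inv : forall ls a (r' : C), lts (Ext ls) a r' -> exists l, a = AInL l /\ In (l, r') ls.
Proof. intros. inversion H; subst; eauto. Qed.

Lemma lts_Int_inv : forall ls a (r' : C), lts (Int ls) a r' ->
  (a = ATau /\ 1 < length ls /\ exists l k, In (l, k) ls /\ r' = Int [(l, k)]) \/
  (exists l, ls = [(l, r')] /\ a = AOutL l).
Proof. intros. inversion H; subst; eauto. left. eauto 10. Qed.

Lemma nodup_in : forall (ls : list (L * C)) l a b, NoDup (map fst ls) -> In (l, a) ls -> In (l, b) ls -> a = b.
Proof.
  induction ls as [|[l0 c0] ls IH]; simpl; intros l a b Hn Ha Hb; [contradiction|].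
  inversion Hn; subst. destruct Ha as [Ea|Ha]; destruct Hb as [Eb|Hb].
  - inversion Ea; inversion Eb; subst; auto.
  - inversion Ea; subst. exfalso. apply H1. apply in_map_iff. exists (l, b); auto.
  - inversion Eb; subst. exfalso. apply H1. apply in_map_iff. exists (l, a); auto.
  - eauto.
Qed.

Definition dmap (ls : list (L * C)) := map (fun p => (fst p, dual (snd p))) ls.

Lemma in_dmap : forall ls l d, In (l, d) (dmap ls) -> exists k, In (l, k) ls /\ d = dual k.
Proof.
  intros ls l d H. apply in_map_iff in H as [[l' k] [E Hi]]. simpl in E. inversion E; subst. eauto.
Qed.

Lemma in_dmap2 : forall ls l k, In (l, k) ls -> In (l, dual k) (dmap ls).
Proof. intros. apply in_map_iff. exists (l, k); auto. Qed.


Lemma is_mu_dec : forall (s : C), (exists x k, s = Mu x k) \/ (forall x k, s <> Mu x k).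
Proof. destruct s; try (right; intros; discriminate). left; eauto. Qed.

Lemma SC_parts_OutS : forall (m k : C), SC (OutS m k) -> SC m.
Proof. intros m k [Hw Hc]. inversion Hw; subst. split; auto. intros y Hy; apply (Hc y); constructor; auto. Qed.
Lemma SC_parts_InS : forall (m k : C), SC (InS m k) -> SC m.
Proof. intros m k [Hw Hc]. inversion Hw; subst. split; auto. intros y Hy; apply (Hc y); constructor; auto. Qed.
Lemma SC_Ext_nodup : forall (ls : list (L * C)), SC (Ext ls) -> NoDup (map fst ls) /\ ls <> [].
Proof. intros ls [Hw _]. inversion Hw; subst; auto. Qed.
Lemma SC_Int_nodup : forall (ls : list (L * C)), SC (Int ls) -> NoDup (map fst ls) /\ ls <> [].
Proof. intros ls [Hw _]. inversion Hw; subst; auto. Qed.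

Section WB2.
Context (B : C -> C -> Prop).
Hypothesis Hlr : forall t, leb t t.
Hypothesis HBr : forall a : C, SC a -> B a a.
Notation comp := (complies leb B).
Notation pt := (par_tau leb B).

Definition Qrel (v u : C) : Prop :=
  v = dual u \/
  (exists ls l k, u = Ext ls /\ In (l, k) ls /\ v = Int [(l, dual k)]) \/
  (exists ls l k, u = Int [(l, k)] /\ In (l, k) ls /\ NoDup (map fst ls) /\ v = Ext (dmap ls)).

Definition Rd (r s : C) : Prop :=
  SC r /\ SC s /\ exists u v, unfolds s u /\ unfolds r v /\ Qrel v u.

Lemma Rd_dual : forall k, SC k -> Rd (dual k) k.
Proof.
  intros k Hk. destruct (unfolds_total Hk) as [u Hu].
  split; [apply SC_dual; auto|]. split; auto. exists u, (dual u). repeat split; auto.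
  apply unfolds_dual; auto. left; auto.
Qed.

Lemma r_tau : forall r v u r', unfolds r v -> Qrel v u -> (forall x k, u <> Mu x k) ->
  lts r ATau r' -> exists v', unfolds r' v' /\ Qrel v' u.
Proof.
  intros r v u r' Hv HQ Hu Hl. destruct (is_mu_dec r) as [[x [k ->]]|Hr].
  - apply lts_Mu_inv in Hl as [_ ->]. inversion Hv; subst. eauto.
    exfalso; eapply H; eauto.
  - apply unfolds_id in Hv; auto. subst v.
    destruct HQ as [E|[[ls [l [k [E1 [E2 E3]]]]]|[ls [l [k [E1 [E2 [E3 E4]]]]]]]]; subst.
    + destruct u as [| | | | |ls0|ls0| |]; simpl in Hl; try (inversion Hl; fail).
      * apply lts_Int_inv in Hl as [[_ [Hlen [l [d [Hi E]]]]]|[l [_ E]]]; [|discriminate].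
        apply in_dmap in Hi as [k [Hi ->]]. exists r'. split.
        -- subst. constructor. discriminate.
        -- right; left. exists ls0, l, k. subst; auto.
      * exfalso; eapply Hu; eauto.
    + apply lts_Int1_inv in Hl as [E _]. discriminate.
    + apply lts_Ext_inv in Hl as [l0 [E _]]. discriminate.
Qed.

Lemma s_tau : forall v u s', SC u -> (forall x k, u <> Mu x k) -> Qrel v u ->
  lts u ATau s' -> exists u', unfolds s' u' /\ Qrel v u'.
Proof.
  intros v u s' Hs Hu HQ Hl.
  destruct u as [| | | | |ls0|ls0| |]; try (inversion Hl; fail).
  - apply lts_Int_inv in Hl as [[_ [Hlen [l0 [k [Hi E]]]]]|[l0 [_ E]]]; [|discriminate]. subst.
    exists (Int [(l0, k)]). split. constructor; discriminate.
    destruct HQ as [E|[[ls [l [k' [E1 [E2 E3]]]]]|[ls [l [k' [E1 [E2 [E3 E4]]]]]]]].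
    + right; right. exists ls0, l0, k. repeat split; auto. apply SC_Int_nodup; auto.
    + discriminate.
    + inversion E1; subst. simpl in Hlen. lia.
  - exfalso; eapply Hu; eauto.
Qed.

Lemma sync_case : forall v u r' s' a1 a2, SC u -> (forall x k, u <> Mu x k) -> Qrel v u ->
  lts v a1 r' -> lts u a2 s' -> bowtie leb B a1 a2 -> r' = dual s'.
Proof.
  intros v u r' s' a1 a2 Hs Hu HQ H1 H2 Hb.
  destruct HQ as [E|[[ls [l [k [E1 [E2 E3]]]]]|[ls [l [k [E1 [E2 [E3 E4]]]]]]]]; subst.
  - destruct u as [| | | | |ls0|ls0| |]; simpl in H1.
    + inversion H1; subst; simpl in Hb; contradiction.
    + inversion H1; subst. inversion H2; subst. auto.
    + inversion H1; subst. inversion H2; subst. auto.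
    + inversion H1; subst. inversion H2; subst. auto.
    + inversion H1; subst. inversion H2; subst. auto.
    + apply lts_Int_inv in H1 as [[-> _]|[l [E ->]]].
      * destruct a2; simpl in Hb; contradiction.
      * apply lts_Ext_inv in H2 as [l' [-> Hi]]. simpl in Hb. subst l'.
        destruct ls0 as [|[l1 k1] [|p ls']]; simpl in E; try discriminate.
        inversion E; subst. destruct Hi as [Hi|[]]. inversion Hi; subst; auto.
    + apply lts_Ext_inv in H1 as [l [-> Hi]]. apply in_dmap in Hi as [k [Hi ->]].
      apply lts_Int_inv in H2 as [[-> _]|[l' [E ->]]].
      * simpl in Hb; contradiction.
      * simpl in Hb. subst. destruct Hi as [Hi|[]]. inversion Hi; subst; auto.
    + exfalso; eapply Hu; eauto.
    + inversion H1.
  - apply lts_Int1_inv in H1 as [-> ->]. apply lts_Ext_inv in H2 as [l' [-> Hi]].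
    simpl in Hb; subst l'. f_equal. eapply nodup_in; eauto. apply SC_Ext_nodup; auto.
  - apply lts_Ext_inv in H1 as [l' [-> Hi]]. apply in_dmap in Hi as [k' [Hi ->]].
    apply lts_Int1_inv in H2 as [-> ->]. simpl in Hb; subst l'. f_equal. eapply nodup_in; eauto.
Qed.

Lemma Rd_sim : compliance_sim leb B Rd.
Proof.
  intros r s [Hr [Hs [u [v [Hu [Hv HQ]]]]]].
  assert (HuSC : SC u) by (eapply unfolds_SC; eauto).
  assert (Hum : forall x k, u <> Mu x k) by (eapply unfolds_nonmu; eauto).
  assert (Hmoves : forall r' s', pt r s r' s' -> Rd r' s').
  { intros r' s' Hp. inversion Hp; subst.
    - destruct (r_tau Hv HQ Hum H) as [v' [Hv' HQ']].
      red; split; [exact (lts_SC Hr H)|]. split; auto. eauto.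
    - red; split; auto. split; [exact (lts_SC Hs H)|].
      destruct (is_mu_dec s) as [[x [k ->]]|Hsm].
      + apply lts_Mu_inv in H as [_ ->]. inversion Hu; subst.
        * exists u, v; auto.
        * exfalso; eapply H; eauto.
      + apply unfolds_id in Hu; auto. subst u.
        destruct (s_tau HuSC Hum HQ H) as [u' [Hu' HQ']]. eauto.
    - destruct (is_mu_dec r) as [[x [k ->]]|Hrm].
      + apply lts_Mu_inv in H as [-> _]. simpl in H1; contradiction.
      + destruct (is_mu_dec s) as [[x [k ->]]|Hsm].
        * apply lts_Mu_inv in H0 as [-> _]. destruct a1; simpl in H1; contradiction.
        * apply unfolds_id in Hu; auto. apply unfolds_id in Hv; auto. subst u v.
          rewrite (sync_case HuSC Hum HQ H H0 H1). apply Rd_dual. eapply lts_SC; eauto. }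
  split; auto.
  intros Hn. 
  destruct (is_mu_dec r) as [[x [k ->]]|Hrm].
  { exfalso; apply Hn. eexists; exists s. apply pt_left. constructor. }
  destruct (is_mu_dec s) as [[x [k ->]]|Hsm].
  { exfalso; apply Hn. exists r; eexists. apply pt_right. constructor. }
  apply unfolds_id in Hu; auto. apply unfolds_id in Hv; auto. subst u v.
  destruct HQ as [E|[[ls [l [k [E1 [E2 E3]]]]]|[ls [l [k [E1 [E2 [E3 E4]]]]]]]]; subst.
  - destruct s as [| | | | |ls0|ls0| |]; simpl.
    + split; exists One; constructor.
    + exfalso; apply Hn. do 2 eexists. eapply pt_sync; try constructor. simpl; apply Hlr.
    + exfalso; apply Hn. do 2 eexists. eapply pt_sync; try constructor. simpl; apply Hlr.
    + exfalso; apply Hn. do 2 eexists. eapply pt_sync; try constructor. simpl.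
      apply HBr. eapply SC_parts_OutS; eauto.
    + exfalso; apply Hn. do 2 eexists. eapply pt_sync; try constructor. simpl.
      apply HBr. eapply SC_parts_InS; eauto.
    + exfalso; apply Hn. destruct (SC_Ext_nodup Hs) as [_ Hne].
      destruct ls0 as [|[l1 k1] [|p ls']]; [congruence| |].
      * do 2 eexists. eapply pt_sync. simpl. apply lts_outL. apply lts_ext. left; reflexivity. simpl; auto.
      * do 2 eexists. apply pt_left. eapply lts_int_tau. simpl; lia. left; reflexivity.
    + exfalso; apply Hn. destruct (SC_Int_nodup Hs) as [_ Hne].
      destruct ls0 as [|[l1 k1] [|p ls']]; [congruence| |].
      * do 2 eexists. eapply pt_sync. simpl. apply lts_ext. left; reflexivity. apply lts_outL. simpl; auto.
      * do 2 eexists. apply pt_right. eapply lts_int_tau. simpl; lia. left; reflexivity.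
    + exfalso; eapply Hsm; eauto.
    + exfalso; eapply SC_notvar; eauto.
  - exfalso; apply Hn. do 2 eexists. eapply pt_sync. apply lts_outL. apply lts_ext. eauto. simpl; auto.
  - exfalso; apply Hn. do 2 eexists. eapply pt_sync. apply lts_ext. apply in_dmap2; eauto.
    apply lts_outL. simpl; auto.
Qed.

Lemma dual_complies : forall s, SC s -> comp (dual s) s.
Proof.
  intros s Hs. exists Rd. split; [|split].
  - intros a b [Ha [Hb _]]; auto.
  - apply Rd_sim.
  - apply Rd_dual; auto.
Qed.

End WB2.

Lemma SC_Ext_elem : forall (ls : list (L * C)) l c, SC (Ext ls) -> In (l, c) ls -> SC c.
Proof. intros ls l c Hs Hi. apply (lts_SC (s := Ext ls) (a := AInL l)); auto. constructor; auto. Qed.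
Lemma SC_Int_elem : forall (ls : list (L * C)) l c, SC (Int ls) -> In (l, c) ls -> SC c.
Proof.
  intros ls l c Hs Hi.
  assert (H1 : SC (Int [(l, c)])).
  { destruct ls as [|p [|q ls']].
    - destruct Hi.
    - destruct Hi as [E|[]]; subst; auto.
    - apply (lts_SC (s := Int (p :: q :: ls')) (a := ATau)); auto. constructor; auto. simpl; lia. }
  apply (lts_SC (s := Int [(l, c)]) (a := AOutL l)); auto. constructor.
Qed.

Lemma tau_nonmu : forall (u s' : C), (forall x k, u <> Mu x k) -> lts u ATau s' ->
  exists ls l k, u = Int ls /\ 1 < length ls /\ In (l, k) ls /\ s' = Int [(l, k)].
Proof.
  intros u s' Hu Hl. inversion Hl; subst; eauto 10. exfalso; eapply Hu; eauto.
Qed.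

Section Main.
Context (B : C -> C -> Prop).
Hypothesis Hlr : forall t, leb t t.
Hypothesis HBr : forall a : C, SC a -> B a a.
Notation comp := (complies leb B).
Notation pt := (par_tau leb B).

Lemma exists_move : forall r s, comp r s -> (forall r', ~ lts r ACheck r') ->
  exists r' s', pt r s r' s'.
Proof.
  intros r s Hc Hn. destruct (Classical_Prop.classic (exists r' s', pt r s r' s')) as [H|H]; auto.
  destruct (complies_stuck Hc H) as [[r' Hr] _]. exfalso; eapply Hn; eauto.
Qed.

Lemma prefix_test : forall r u, comp r u -> (forall x k, u <> Mu x k) ->
  (forall r', ~ lts r ATau r') -> (forall r', ~ lts r ACheck r') ->
  (forall a1 r' l, lts r a1 r' -> ~ bowtie leb B a1 (AOutL l)) ->
  exists a1 a2 r' s', lts r a1 r' /\ lts u a2 s' /\ bowtie leb B a1 a2 /\ comp r' s'.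
Proof.
  intros r u Hc Hu Ht Hck Hb.
  destruct (exists_move Hc Hck) as [r' [s' Hp]].
  inversion Hp; subst.
  - exfalso; eapply Ht; eauto.
  - destruct (tau_nonmu Hu H) as [ls [l [k [_ [_ [_ ->]]]]]].
    assert (Hc' : comp _ (Int [(l, k)])) by (eapply complies_step; [exact Hc | apply pt_right; exact H]).
    destruct (exists_move Hc' Hck) as [r2 [s2 Hp2]]. inversion Hp2; subst.
    + exfalso; eapply Ht; eauto.
    + apply lts_Int1_inv in H0 as [E _]; discriminate.
    + apply lts_Int1_inv in H1 as [-> _]. exfalso; eapply Hb; eauto.
  - exists a1, a2, r', s'. repeat split; auto. eapply complies_step; eauto.
Qed.

Lemma single_sync_comp : forall r u ar au r' u', SC r -> SC u ->
  (forall b c, pt r u b c -> b = r' /\ c = u') -> lts r ar r' -> lts u au u' ->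
  bowtie leb B ar au -> comp r' u' -> comp r u.
Proof.
  intros r u ar au r' u' Hr Hu Huniq H1 H2 Hb Hc. apply complies_intro; auto.
  - intros Hn; exfalso; apply Hn. exists r', u'. eapply pt_sync; eauto.
  - intros b c Hp. destruct (Huniq _ _ Hp); subst; auto.
Qed.

Definition Rsub (a b : C) := SC a /\ SC b /\ subcontract leb B a b.

Lemma ext_analysis : forall (lsr : list (L * C)) u, comp (Ext lsr) u -> (forall x k, u <> Mu x k) ->
  exists ls2, u = Int ls2 /\ forall l c2, In (l, c2) ls2 -> exists r', In (l, r') lsr /\ comp r' c2.
Proof.
  intros lsr u Hc Hu.
  assert (Hck : forall r', ~ lts (Ext lsr) ACheck r').
  { intros r' H. apply lts_Ext_inv in H as [l [E _]]; discriminate. }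
  assert (Hint : exists ls2, u = Int ls2).
  { destruct (exists_move Hc Hck) as [r' [s' Hp]]. inversion Hp; subst.
    - apply lts_Ext_inv in H as [l [E _]]; discriminate.
    - destruct (tau_nonmu Hu H) as [ls [_ [_ [-> _]]]]; eauto.
    - apply lts_Ext_inv in H as [l [-> _]]. destruct a2; simpl in H1; try contradiction.
      inversion H0; subst; eauto. }
  destruct Hint as [ls2 ->]. exists ls2. split; auto.
  intros l c2 Hi.
  assert (Hc2 : comp (Ext lsr) (Int [(l, c2)])).
  { destruct ls2 as [|p [|q ls']].
    - destruct Hi.
    - destruct Hi as [<-|[]]; auto.
    - eapply complies_step; eauto. apply pt_right. constructor; auto. simpl; lia. }
  destruct (exists_move Hc2 Hck) as [r' [s' Hp]]. inversion Hp; subst.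
  - apply lts_Ext_inv in H as [l0 [E _]]; discriminate.
  - apply lts_Int1_inv in H as [E _]; discriminate.
  - apply lts_Ext_inv in H as [l0 [-> Hi0]]. apply lts_Int1_inv in H0 as [-> ->].
    simpl in H1; subst. exists r'. split; auto. eapply complies_step; eauto.
Qed.

Lemma SC_single : forall l (c : C), SC c -> SC (Int [(l, c)]).
Proof.
  intros l c [Hw Hc]. split.
  - constructor. congruence. simpl. constructor; auto. constructor.
    intros p [<-|[]]; auto.
  - intros y Hy. inversion Hy as [| | | | | | | | ls0 l0 c0 Hi Hoc |]; subst.
    destruct Hi as [E|[]]. inversion E; subst. apply (Hc y); auto.
Qed.

Lemma SC_pref : forall (k : C), SC k ->
  (forall t, SC (InT t k)) /\ (forall t, SC (OutT t k)) /\
  (forall m, SC m -> SC (InS m k)) /\ (forall m, SC m -> SC (OutS m k)).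
Proof.
  intros k [Hw Hc]. split; [|split; [|split]].
  - intros t. split. constructor; auto. intros y Hy. inversion Hy; subst. apply (Hc y); auto.
  - intros t. split. constructor; auto. intros y Hy. inversion Hy; subst. apply (Hc y); auto.
  - intros m [Hmw Hmc]. split. constructor; auto. intros y Hy. inversion Hy; subst; [apply (Hmc y)|apply (Hc y)]; auto.
  - intros m [Hmw Hmc]. split. constructor; auto. intros y Hy. inversion Hy; subst; [apply (Hmc y)|apply (Hc y)]; auto.
Qed.

Lemma ext_test : forall (ls1 : list (L * C)) (F : L * C -> C), SC (Int ls1) ->
  (forall p, In p ls1 -> SC (F p) /\ comp (F p) (snd p)) ->
  comp (Ext (map (fun p => (fst p, F p)) ls1)) (Int ls1).
Proof.
  intros ls1 F Hs HF. destruct (SC_Int_nodup Hs) as [Hnd Hne].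
  set (lr := map (fun p => (fst p, F p)) ls1).
  assert (Hr : SC (Ext lr)).
  { split.
    - constructor.
      + unfold lr; destruct ls1; simpl; congruence.
      + unfold lr; rewrite map_map; simpl. rewrite map_ext with (g := fst); auto.
      + intros p Hp. unfold lr in Hp. apply in_map_iff in Hp as [q [<- Hq]]. simpl. apply HF; auto.
    - intros y Hy. inversion Hy as [| | | | | | | ls0 l0 c0 Hi Hoc | |]; subst.
      unfold lr in Hi. apply in_map_iff in Hi as [q [E Hq]].
      inversion E; subst. destruct (HF q Hq) as [[_ Hcl] _]. apply (Hcl y); auto. }
  assert (Hsync : forall l' b c, In (l', b) lr -> In (l', c) ls1 -> b = F (l', c)).
  { intros l' b c Hb Hc. unfold lr in Hb. apply in_map_iff in Hb as [q [E Hq]]. inversion E; subst.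
    destruct q as [lq cq]. simpl. f_equal. f_equal. eapply nodup_in; eauto. }
  assert (Hlr' : forall l' c', In (l', c') ls1 -> In (l', F (l', c')) lr).
  { intros l' c' Hi. unfold lr. apply in_map_iff. exists (l', c'); auto. }
  assert (Hinner : forall l' c', In (l', c') ls1 -> comp (Ext lr) (Int [(l', c')])).
  { intros l' c' Hi.
    eapply single_sync_comp with (ar := AInL l') (au := AOutL l') (r' := F (l', c')) (u' := c').
    - auto.
    - apply SC_single. eapply SC_Int_elem; eauto.
    - intros b c Hp. inversion Hp; subst.
      + apply lts_Ext_inv in H as [l0 [E _]]; discriminate.
      + apply lts_Int1_inv in H as [E _]; discriminate.
      + apply lts_Ext_inv in H as [l0 [-> Hi0]]. apply lts_Int1_inv in H0 as [-> ->].
        simpl in H1; subst. split; auto.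
    - apply lts_ext. auto.
    - constructor.
    - simpl; auto.
    - destruct (HF _ Hi); auto. }
  apply complies_intro; auto.
  - intros Hn; exfalso; apply Hn. destruct ls1 as [|[l k] [|q ls']]; [congruence| |].
    + exists (F (l, k)), k. eapply pt_sync. apply lts_ext. apply Hlr'; left; auto.
      apply lts_outL. simpl; auto.
    + exists (Ext lr), (Int [(l, k)]). apply pt_right. constructor. simpl; lia. left; auto.
  - intros b c Hp. inversion Hp; subst.
    + apply lts_Ext_inv in H as [l0 [E _]]; discriminate.
    + apply lts_Int_inv in H as [[_ [_ [l0 [k [Hi ->]]]]]|[l0 [_ E]]]; [|discriminate].
      apply Hinner; auto.
    + apply lts_Ext_inv in H as [l0 [-> Hi0]].
      apply lts_Int_inv in H0 as [[-> _]|[l' [E ->]]]; [simpl in H1; contradiction|].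
      simpl in H1; subst l0. assert (Hin : In (l', c) ls1) by (rewrite E; left; auto).
      rewrite (Hsync _ _ _ Hi0 Hin). apply (HF _ Hin).
Qed.

Lemma Rsub_S : forall a b, Rsub a b -> S_fun leb B Rsub a b.
Proof.
  intros a b [Ha [Hb Hsub]] u1 Hu1.
  assert (HSCu1 : SC u1) by (eapply unfolds_SC; eauto).
  destruct (unfolds_total Hb) as [u2 Hu2].
  assert (HSCu2 : SC u2) by (eapply unfolds_SC; eauto).
  assert (Hu2m : forall x k, u2 <> Mu x k) by (eapply unfolds_nonmu; eauto).
  assert (Htr : forall rho, SC rho -> comp rho u1 -> comp rho u2).
  { intros rho Hrho Hc. apply complies_fwd with (s := b); auto. apply Hsub; auto.
    apply complies_back with (u := u1); auto. }
  destruct u1 as [|t1 k1|t1 k1|m1 k1|m1 k1|ls1|ls1|x k|x]; simpl; auto.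
  -
    assert (HO : SC (@One BT L)) by (split; [constructor|intros y Hy; inversion Hy]).
    assert (Hc : comp One One).
    { apply complies_intro; auto.
      - intros _; split; exists One; constructor.
      - intros b0 c0 Hp; inversion Hp; subst; try (inversion H; fail).
        inversion H; subst; simpl in H1; contradiction. }
    apply Htr in Hc; auto.
    destruct (Classical_Prop.classic (exists r' s', pt One u2 r' s')) as [[r' [s' Hp]]|Hn].
    + exfalso. inversion Hp; subst.
      * inversion H.
      * destruct (tau_nonmu Hu2m H) as [ls [l [k [_ [_ [_ ->]]]]]].
        assert (Hc' : comp One (Int [(l, k)])) by (eapply complies_step; eauto).
        destruct (Classical_Prop.classic (exists r' s', pt One (Int [(l, k)]) r' s')) as [[r2 [s2 Hp2]]|Hn2].
        -- inversion Hp2; subst.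
           ++ inversion H0.
           ++ apply lts_Int1_inv in H0 as [E _]; discriminate.
           ++ inversion H0; subst; simpl in H2; contradiction.
        -- destruct (complies_stuck Hc' Hn2) as [_ [s2 H2]]. apply lts_Int1_inv in H2 as [E _]; discriminate.
      * inversion H; subst; simpl in H1; contradiction.
    + destruct (complies_stuck Hc Hn) as [_ [s2 H2]]. inversion H2; subst. auto.
  -
    destruct (SC_pref (lts_SC HSCu1 (lts_inT t1 k1))) as [_ [HOT _]].
    assert (Hk1 : SC k1) by exact (lts_SC HSCu1 (lts_inT t1 k1)).
    assert (G : forall rho, SC rho -> comp rho k1 ->
      exists t2 k2, u2 = InT t2 k2 /\ leb t1 t2 /\ comp rho k2).
    { intros rho Hrho Hcr. destruct (SC_pref Hrho) as [_ [HO' _]].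
      assert (Hc1 : comp (OutT t1 rho) (InT t1 k1)).
      { eapply single_sync_comp with (ar := AOutT t1) (au := AInT t1) (r' := rho) (u' := k1); auto.
        - intros b0 c0 Hp; inversion Hp; subst; [inversion H|inversion H|].
          inversion H; inversion H0; subst; auto.
        - constructor.
        - constructor.
        - simpl; apply Hlr. }
      apply Htr in Hc1; auto.
      destruct (prefix_test Hc1 Hu2m) as [a1 [a2 [r' [s' [H1 [H2 [Hb0 Hc]]]]]]].
      - intros r' H; inversion H.
      - intros r' H; inversion H.
      - intros a1 r' l H; inversion H; subst; simpl; auto.
      - inversion H1; subst. destruct a2; simpl in Hb0; try contradiction. inversion H2; subst. eauto. }
    destruct (G _ (SC_dual Hk1) (dual_complies B Hlr HBr Hk1)) as [t2 [k2 [-> [Hl _]]]].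
    exists t2, k2. split; auto. split; auto.
    split; auto. split. exact (lts_SC HSCu2 (lts_inT t2 k2)).
    intros rho Hrho Hcr. destruct (G rho Hrho Hcr) as [t3 [k3 [E [_ Hc]]]]. inversion E; subst; auto.
  -
    assert (Hk1 : SC k1) by exact (lts_SC HSCu1 (lts_outT t1 k1)).
    assert (G : forall rho, SC rho -> comp rho k1 ->
      exists t2 k2, u2 = OutT t2 k2 /\ leb t2 t1 /\ comp rho k2).
    { intros rho Hrho Hcr. destruct (SC_pref Hrho) as [HI' _].
      assert (Hc1 : comp (InT t1 rho) (OutT t1 k1)).
      { eapply single_sync_comp with (ar := AInT t1) (au := AOutT t1) (r' := rho) (u' := k1); auto.
        - intros b0 c0 Hp; inversion Hp; subst; [inversion H|inversion H|].
          inversion H; inversion H0; subst; auto.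
        - constructor.
        - constructor.
        - simpl; apply Hlr. }
      apply Htr in Hc1; auto.
      destruct (prefix_test Hc1 Hu2m) as [a1 [a2 [r' [s' [H1 [H2 [Hb0 Hc]]]]]]].
      - intros r' H; inversion H.
      - intros r' H; inversion H.
      - intros a1 r' l H; inversion H; subst; simpl; auto.
      - inversion H1; subst. destruct a2; simpl in Hb0; try contradiction. inversion H2; subst. eauto. }
    destruct (G _ (SC_dual Hk1) (dual_complies B Hlr HBr Hk1)) as [t2 [k2 [-> [Hl _]]]].
    exists t2, k2. split; auto. split; auto.
    split; auto. split. exact (lts_SC HSCu2 (lts_outT t2 k2)).
    intros rho Hrho Hcr. destruct (G rho Hrho Hcr) as [t3 [k3 [E [_ Hc]]]]. inversion E; subst; auto.
  -
    assert (Hk1 : SC k1) by exact (lts_SC HSCu1 (lts_outS m1 k1)).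
    assert (Hm1 : SC m1) by (eapply SC_parts_OutS; eauto).
    assert (G : forall rho, SC rho -> comp rho k1 ->
      exists m2 k2, u2 = OutS m2 k2 /\ B m2 m1 /\ comp rho k2).
    { intros rho Hrho Hcr. destruct (SC_pref Hrho) as [_ [_ [HI' _]]].
      assert (Hc1 : comp (InS m1 rho) (OutS m1 k1)).
      { eapply single_sync_comp with (ar := AInS m1) (au := AOutS m1) (r' := rho) (u' := k1); auto.
        - intros b0 c0 Hp; inversion Hp; subst; [inversion H|inversion H|].
          inversion H; inversion H0; subst; auto.
        - constructor.
        - constructor.
        - simpl; apply HBr; auto. }
      apply Htr in Hc1; auto.
      destruct (prefix_test Hc1 Hu2m) as [a1 [a2 [r' [s' [H1 [H2 [Hb0 Hc]]]]]]].
      - intros r' H; inversion H.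
      - intros r' H; inversion H.
      - intros a1 r' l H; inversion H; subst; simpl; auto.
      - inversion H1; subst. destruct a2; simpl in Hb0; try contradiction. inversion H2; subst. eauto. }
    destruct (G _ (SC_dual Hk1) (dual_complies B Hlr HBr Hk1)) as [m2 [k2 [-> [Hl _]]]].
    exists m2, k2. split; auto. split; auto.
    split; auto. split. exact (lts_SC HSCu2 (lts_outS m2 k2)).
    intros rho Hrho Hcr. destruct (G rho Hrho Hcr) as [t3 [k3 [E [_ Hc]]]]. inversion E; subst; auto.
  -
    assert (Hk1 : SC k1) by exact (lts_SC HSCu1 (lts_inS m1 k1)).
    assert (Hm1 : SC m1) by (eapply SC_parts_InS; eauto).
    assert (G : forall rho, SC rho -> comp rho k1 ->
      exists m2 k2, u2 = InS m2 k2 /\ B m1 m2 /\ comp rho k2).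
    { intros rho Hrho Hcr. destruct (SC_pref Hrho) as [_ [_ [_ HO']]].
      assert (Hc1 : comp (OutS m1 rho) (InS m1 k1)).
      { eapply single_sync_comp with (ar := AOutS m1) (au := AInS m1) (r' := rho) (u' := k1); auto.
        - intros b0 c0 Hp; inversion Hp; subst; [inversion H|inversion H|].
          inversion H; inversion H0; subst; auto.
        - constructor.
        - constructor.
        - simpl; apply HBr; auto. }
      apply Htr in Hc1; auto.
      destruct (prefix_test Hc1 Hu2m) as [a1 [a2 [r' [s' [H1 [H2 [Hb0 Hc]]]]]]].
      - intros r' H; inversion H.
      - intros r' H; inversion H.
      - intros a1 r' l H; inversion H; subst; simpl; auto.
      - inversion H1; subst. destruct a2; simpl in Hb0; try contradiction. inversion H2; subst. eauto. }
    destruct (G _ (SC_dual Hk1) (dual_complies B Hlr HBr Hk1)) as [m2 [k2 [-> [Hl _]]]].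
    exists m2, k2. split; auto. split; auto.
    split; auto. split. exact (lts_SC HSCu2 (lts_inS m2 k2)).
    intros rho Hrho Hcr. destruct (G rho Hrho Hcr) as [t3 [k3 [E [_ Hc]]]]. inversion E; subst; auto.
  -
    destruct (SC_Ext_nodup HSCu1) as [Hnd1 Hne1].
    assert (G : forall l c1 rho, In (l, c1) ls1 -> SC rho -> comp rho c1 ->
      exists ls2 c2, u2 = Ext ls2 /\ In (l, c2) ls2 /\ comp rho c2).
    { intros l c1 rho Hi Hrho Hcr.
      assert (Hc1 : comp (Int [(l, rho)]) (Ext ls1)).
      { eapply single_sync_comp with (ar := AOutL l) (au := AInL l) (r' := rho) (u' := c1); auto.
        - apply SC_single; auto.
        - intros b0 c0 Hp; inversion Hp; subst.
          + apply lts_Int1_inv in H as [E _]; discriminate.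
          + apply lts_Ext_inv in H as [l0 [E _]]; discriminate.
          + apply lts_Int1_inv in H as [-> ->]. apply lts_Ext_inv in H0 as [l0 [-> Hi0]].
            simpl in H1; subst l0. split; auto. eapply nodup_in; eauto.
        - constructor.
        - constructor; auto.
        - simpl; auto. }
      apply Htr in Hc1; [|apply SC_single; auto].
      destruct (prefix_test Hc1 Hu2m) as [a1 [a2 [r' [s' [H1 [H2 [Hb0 Hc]]]]]]].
      - intros r' H. apply lts_Int1_inv in H as [E _]; discriminate.
      - intros r' H. apply lts_Int1_inv in H as [E _]; discriminate.
      - intros a1 r' l0 H. apply lts_Int1_inv in H as [-> _]. simpl; auto.
      - apply lts_Int1_inv in H1 as [-> ->]. destruct a2; simpl in Hb0; try contradiction. subst.
        inversion H2; subst. eauto. }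
    destruct ls1 as [|[l0 c0] ls1']; [congruence|].
    assert (Hc0 : SC c0) by exact (SC_Ext_elem _ _ HSCu1 (or_introl eq_refl)).
    destruct (G l0 c0 (dual c0) (or_introl eq_refl) (SC_dual Hc0) (dual_complies B Hlr HBr Hc0))
      as [ls2 [_ [-> _]]].
    exists ls2. split; auto.
    destruct (SC_Ext_nodup HSCu2) as [Hnd2 _].
    intros l c1 Hi. assert (Hc1 : SC c1) by exact (SC_Ext_elem _ _ HSCu1 Hi).
    destruct (G l c1 (dual c1) Hi (SC_dual Hc1) (dual_complies B Hlr HBr Hc1)) as [ls3 [c2 [E [Hi2 _]]]].
    inversion E; subst ls3. exists c2. split; auto. split; auto. split; [exact (SC_Ext_elem _ _ HSCu2 Hi2)|].
    intros rho Hrho Hcr. destruct (G l c1 rho Hi Hrho Hcr) as [ls4 [c3 [E4 [Hi3 Hc3]]]].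
    inversion E4; subst ls4. rewrite (nodup_in _ _ _ _ Hnd2 Hi2 Hi3). auto.
  -
    destruct (SC_Int_nodup HSCu1) as [Hnd1 Hne1].
    assert (G : forall F : L * C -> C, (forall p, In p ls1 -> SC (F p) /\ comp (F p) (snd p)) ->
      exists ls2, u2 = Int ls2 /\ forall l c2, In (l, c2) ls2 ->
        exists p, In p ls1 /\ fst p = l /\ comp (F p) c2).
    { intros F HF. assert (Hc1 := ext_test F HSCu1 HF).
      assert (HSr : SC (Ext (map (fun p => (fst p, F p)) ls1))) by (apply complies_SC in Hc1; tauto).
      apply Htr in Hc1; auto.
      destruct (ext_analysis Hc1 Hu2m) as [ls2 [-> H]]. exists ls2. split; auto.
      intros l c2 Hi. destruct (H l c2 Hi) as [r' [Hi' Hc]].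
      apply in_map_iff in Hi' as [q [E Hq]]. inversion E; subst. eauto. }
    destruct (G (fun p => dual (snd p))) as [ls2 [-> HG]].
    { intros [l c] Hi. simpl. assert (SC c) by exact (SC_Int_elem _ _ HSCu1 Hi).
      split; [apply SC_dual; auto | apply dual_complies; auto]. }
    exists ls2. split; auto.
    intros l c2 Hi. destruct (HG l c2 Hi) as [[l' c1] [Hi1 [El _]]]. simpl in El; subst l'.
    exists c1. split; auto.
    assert (Hc1 : SC c1) by exact (SC_Int_elem _ _ HSCu1 Hi1).
    split; auto. split; [exact (SC_Int_elem _ _ HSCu2 Hi)|].
    intros rho Hrho Hcr.
    set (F := fun p : L * C => if ClassicalEpsilon.excluded_middle_informative (p = (l, c1))
                               then rho else dual (snd p)).
    destruct (G F) as [ls3 [E3 HG3]].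
    { intros p Hp. unfold F. destruct (ClassicalEpsilon.excluded_middle_informative (p = (l, c1))).
      - subst; auto.
      - assert (SC (snd p)) by (destruct p; exact (SC_Int_elem _ _ HSCu1 Hp)).
        split; [apply SC_dual; auto | apply dual_complies; auto]. }
    inversion E3; subst ls3.
    destruct (HG3 l c2 Hi) as [[l' c'] [Hi' [El Hc]]]. simpl in El; subst l'.
    assert (c' = c1) by (eapply nodup_in; eauto). subst c'.
    unfold F in Hc. destruct (ClassicalEpsilon.excluded_middle_informative ((l, c1) = (l, c1))); auto.
    contradiction.
Qed.

End Main.

End S.

Theorem mainTheorem5 (BT : Type) (leb : BT -> BT -> Prop) (L : Type)
  (Hleb : PreOrder leb)
  (B : contract BT L -> contract BT L -> Prop)
  (HB : preorder_on_SC B)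
  (s1 s2 : contract BT L) :
  SC s1 -> SC s2 -> subcontract leb B s1 s2 -> subcontract_co leb B s1 s2.
Proof.
  intros H1 H2 Hsub. destruct HB as [_ [HBr _]].
  exists (Rsub leb B). split; [|split].
  - intros a b [Ha [Hb _]]; auto.
  - intros a b H. apply Rsub_S; auto. intros t; reflexivity.
  - split; auto.
Qed.
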